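(* Let $\theta>1$ and $\lambda>1$ be real numbers. For $N\ge 2$ and $1\le r\le N-1$ let \[ P_r(N,\theta)=\frac{r(1-\theta)\sum_{i=r}^{N-1}\frac{\theta^i}{i}}{1-\theta^N}, \] the probability of winning the weighted game of best choice on $N$ candidates with the strategy rejecting $r$ initial candidates. Then, with $r=N/\lambda$, \[ \lim_{N\to\infty} P_{N/\lambda}(N,\theta)=\frac{1}{\lambda}. \]
   Context: In the weighted game of best choice, a permutation $\pi$ of $\{1,\dots,N\}$ is drawn with probability proportional to $\theta^{\pi^{-1}(N)-1}$ (where $\pi^{-1}(N)$ is the position of the best candidate $N$); the player rejects the first $r$ candidates and then accepts the next candidate better than all previous ones, winning if that candidate is $N$. Here $N/\lambda$ is to be understood as an integer number of rejected candidates (e.g. taking $N$ along values for which it is an integer, or rounding). *)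

(* Defs.v *)
From Stdlib Require Import Reals List.
From Coquelicot Require Import Coquelicot.
Open Scope R_scope.

(* sum_{i=r}^{N-1} theta^i / i  (empty when r > N-1) *)
Definition wsum (r N : nat) (theta : R) : R :=
  fold_right Rplus 0 (map (fun i => theta ^ i / INR i) (seq r (N - r))).

Definition P_win (r N : nat) (theta : R) : R :=
  INR r * (1 - theta) * wsum r N theta / (1 - theta ^ N).

(* Main.v *)
Require Import Defs.
From Stdlib Require Import Reals List Lra Lia.
From Coquelicot Require Import Coquelicot.
Open Scope R_scope.

Definition Fs (f : nat -> R) (a m : nat) : R := fold_right Rplus 0 (map f (seq a m)).

Lemma fold_shift (l : list R) (c : R) : fold_right Rplus c l = fold_right Rplus 0 l + c.
Proof. induction l as [|x l IH]; simpl; [lra| rewrite IH; lra]. Qed.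

Lemma Fs_Sr f a m : Fs f a (S m) = Fs f a m + f (a + m)%nat.
Proof. unfold Fs. rewrite seq_S, map_app, fold_right_app. simpl. rewrite fold_shift. lra. Qed.

Lemma Fs_lin f g c d a m : Fs (fun i => c * f i + d * g i) a m = c * Fs f a m + d * Fs g a m.
Proof. induction m as [|m IH]; [unfold Fs; simpl; lra|]. rewrite !Fs_Sr, IH. lra. Qed.

Lemma Fs_le f g a m : (forall i, (a <= i)%nat -> (i < a + m)%nat -> f i <= g i) -> Fs f a m <= Fs g a m.
Proof. induction m as [|m IH]; intros Hfg; [unfold Fs; simpl; lra|]. rewrite !Fs_Sr.
 apply Rplus_le_compat. apply IH; intros; apply Hfg; lia. apply Hfg; lia. Qed.

Lemma Fs_ext f g a m : (forall i, f i = g i) -> Fs f a m = Fs g a m.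
Proof. intros H. unfold Fs. f_equal. apply map_ext. auto. Qed.

Lemma Fs_geom th a m : (th - 1) * Fs (pow th) a m = th ^ (a + m) - th ^ a.
Proof. induction m as [|m IH]; [unfold Fs; simpl; rewrite Nat.add_0_r; lra|].
 rewrite Fs_Sr, Rmult_plus_distr_l, IH, Nat.add_succ_r. simpl. lra. Qed.

Lemma Fs_H th a m : 1 < th ->
  (th - 1)^2 * Fs (fun i => (INR (a + m) - INR i) * th ^ i) a m <= th ^ (a + m + 1).
Proof. intros Hth. induction m as [|m IH].
 - unfold Fs; simpl. assert (0 < th ^ (a+0+1)) by (apply pow_lt; lra). lra.
 - rewrite Fs_Sr.
   rewrite (Fs_ext _ (fun i => 1 * ((INR (a + m) - INR i) * th ^ i) + 1 * th ^ i)).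
   2:{ intros i. rewrite Nat.add_succ_r, S_INR. ring. }
   rewrite Fs_lin. pose proof (Fs_geom th a m) as G.
   rewrite Nat.add_succ_r, S_INR.
   set (H := Fs (fun i => (INR (a + m) - INR i) * th ^ i) a m) in *.
   set (Gs := Fs (pow th) a m) in *.
   assert (Ha : 0 < th ^ a) by (apply pow_lt; lra).
   assert (Hn : th ^ a <= th ^ (a+m)) by (apply Rle_pow; lia || lra).
   replace (S (a + m) + 1)%nat with (a + m + 1 + 1)%nat by lia.
   rewrite !pow_add in *. simpl in *.
   rewrite <- pow_add in *.
   set (X := th ^ (a+m)) in *.
   assert (E: (th-1)^2 * Gs = (th-1)*(X - th^a)) by (rewrite <- G; ring).
   replace (INR (a+m) + 1 - INR (a+m)) with 1 by ring.
   nra.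
Qed.

Lemma S_lower th r N : 1 < th -> (1 <= r)%nat -> (r <= N)%nat ->
  Fs (pow th) r (N - r) <= INR N * wsum r N th.
Proof. intros Hth Hr HN. unfold wsum. fold (Fs (fun i => th ^ i / INR i) r (N - r)).
 assert (0 < INR N) by (apply lt_0_INR; lia).
 replace (INR N * Fs (fun i => th ^ i / INR i) r (N - r)) with
   (Fs (fun i => INR N * (th ^ i / INR i) + 0 * 0) r (N - r)).
 2:{ rewrite (Fs_lin (fun i => th ^ i / INR i) (fun _ => 0)). ring. }
 apply Fs_le. intros i H1 H2.
 assert (0 < INR i) by (apply lt_0_INR; lia).
 assert (INR i <= INR N) by (apply le_INR; lia).
 assert (0 < th ^ i) by (apply pow_lt; lra).
 unfold Rdiv. rewrite Rmult_0_l, Rplus_0_r.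
 apply Rle_trans with (INR i * (th ^ i * / INR i)).
 right; field; lra.
 apply Rmult_le_compat_r; [|lra].
 apply Rmult_le_pos; [lra| left; apply Rinv_0_lt_compat; lra].
Qed.

Lemma S_upper th r N : 1 < th -> (1 <= r)%nat -> (r <= N)%nat ->
  wsum r N th <= / INR N * Fs (pow th) r (N - r) +
     / (INR r * INR N) * Fs (fun i => (INR (r + (N - r)) - INR i) * th ^ i) r (N - r).
Proof. intros Hth Hr HN. unfold wsum. fold (Fs (fun i => th ^ i / INR i) r (N - r)).
 rewrite <- Fs_lin. apply Fs_le. intros i H1 H2.
 replace (r + (N - r))%nat with N by lia.
 assert (0 < INR i) by (apply lt_0_INR; lia).
 assert (INR i <= INR N) by (apply le_INR; lia).
 assert (1 <= INR r) by (apply (le_INR 1); lia).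
 assert (INR r <= INR i) by (apply le_INR; lia).
 assert (0 < th ^ i) by (apply pow_lt; lra).
 assert (E: th ^ i / INR i = / INR N * th ^ i + th ^ i * ((INR N - INR i) / (INR i * INR N)))
  by (field; lra).
 rewrite E. apply Rplus_le_compat_l.
 replace (/ (INR r * INR N) * ((INR N - INR i) * th ^ i)) with
   (th ^ i * ((INR N - INR i) / (INR r * INR N))) by (field; lra).
 apply Rmult_le_compat_l; [lra|]. unfold Rdiv. apply Rmult_le_compat_l; [lra|].
 apply Rinv_le_contravar. nra. nra.
Qed.

Lemma key_lower th X Y r N s G : 1 < th -> 1 < X -> 0 < Y <= X -> 0 < r -> 0 < N ->
  G <= N * s -> (th - 1) * G = X - Y ->
  r / N * (1 - Y / X) <= r * (1 - th) * s / (1 - X).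
Proof. intros. 
 replace (r / N * (1 - Y / X)) with (r * (((X - Y) / N) * / X)) by (field; lra).
 replace (r * (1 - th) * s / (1 - X)) with (r * (((th - 1) * s) * / (X - 1))) by (field; lra).
 apply Rmult_le_compat_l; [lra|].
 apply Rmult_le_compat.
 - apply Rmult_le_pos; [lra| left; apply Rinv_0_lt_compat; lra].
 - left; apply Rinv_0_lt_compat; lra.
 - unfold Rdiv. apply (Rmult_le_reg_r N); [lra|]. rewrite Rmult_assoc, Rinv_l by lra. nra.
 - apply Rinv_le_contravar; lra.
Qed.

Lemma key_upper th X Y r N s G H : 1 < th -> th <= X -> 1 <= Y <= X -> 1 <= r -> 0 < N ->
  s <= / N * G + / (r * N) * H -> (th - 1) * G = X - Y -> (th - 1)^2 * H <= th * X ->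
  r * (1 - th) * s / (1 - X) <= r / N + th^2 / (th - 1)^2 / N.
Proof. intros.
 assert (Hs: r * N * (th - 1) * s <= r * (th - 1) * G + (th - 1) * H).
 { replace (r * (th - 1) * G + (th - 1) * H) with (r * N * (th - 1) * (/ N * G + / (r * N) * H))
     by (field; lra).
   apply Rmult_le_compat_l; [|lra]. apply Rmult_le_pos; [|lra]. nra. }
 assert (Hh: (th - 1) * H <= (X - 1) * th ^ 2 / (th - 1)^2).
 { apply (Rmult_le_reg_r ((th - 1)^2)). nra.
   replace ((X - 1) * th ^ 2 / (th - 1) ^ 2 * (th - 1) ^ 2) with ((X-1)*th^2) by (field; lra). nra. }
 replace (r * (1 - th) * s / (1 - X)) with ((r * N * (th - 1) * s) / (N * (X - 1))) by (field; lra).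
 replace (r / N + th ^ 2 / (th - 1) ^ 2 / N) with
   ((r * (X - 1) + (X - 1) * th ^ 2 / (th - 1)^2) / (N * (X - 1))) by (field; lra).
 unfold Rdiv at 1 2. apply Rmult_le_compat_r. left; apply Rinv_0_lt_compat; nra.
 nra.
Qed.

Lemma ev_big c : eventually (fun n => c < INR n).
Proof. apply is_lim_seq_INR. exists c. auto. Qed.

Lemma INR_sub_ge n m : INR n - INR m <= INR (n - m).
Proof. destruct (Nat.le_gt_cases m n). rewrite minus_INR by lia. lra.
 replace (n - m)%nat with 0%nat by lia. simpl. assert (INR n < INR m) by (apply lt_INR; lia). lra. Qed.

Theorem theorem3p3 (theta lambda : R) (r : nat -> nat) :
  1 < theta -> 1 < lambda ->
  (forall N : nat, Rabs (INR (r N) - INR N / lambda) < 1) ->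
  is_lim_seq (fun N : nat => P_win (r N) N theta) (1 / lambda).
Proof.
 intros Hth Hl Hr.
 assert (Hr2 : forall N, INR N / lambda - 1 < INR (r N) < INR N / lambda + 1).
 { intros N. specialize (Hr N). apply Rabs_def2 in Hr. lra. }
 set (q := / theta).
 set (C := theta ^ 2 / (theta - 1) ^ 2).
 assert (Hlinv : 0 < / lambda < 1).
 { split. apply Rinv_0_lt_compat; lra. rewrite <- Rinv_1. apply Rinv_lt_contravar; lra. }
 assert (Hinv : is_lim_seq (fun n => / INR n) 0).
 { apply (is_lim_seq_inv INR p_infty). apply is_lim_seq_INR. discriminate. }
 assert (HrN : is_lim_seq (fun n => INR (r n) / INR n) (1 / lambda)).
 { apply is_lim_seq_le_le_loc with (u := fun n => 1 / lambda - / INR n)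
      (w := fun n => 1 / lambda + / INR n).
   - destruct (ev_big 0) as [M HM]. exists M. intros n Hn. specialize (HM n Hn).
     specialize (Hr2 n). split.
     + apply (Rmult_le_reg_r (INR n)); [lra|].
       replace ((1 / lambda - / INR n) * INR n) with (INR n / lambda - 1) by (field; lra).
       replace (INR (r n) / INR n * INR n) with (INR (r n)) by (field; lra). lra.
     + apply (Rmult_le_reg_r (INR n)); [lra|].
       replace ((1 / lambda + / INR n) * INR n) with (INR n / lambda + 1) by (field; lra).
       replace (INR (r n) / INR n * INR n) with (INR (r n)) by (field; lra). lra.
   - assert (L := is_lim_seq_minus' _ _ _ _ (is_lim_seq_const (1 / lambda)) Hinv).
     rewrite Rminus_0_r in L. exact L.
   - assert (L := is_lim_seq_plus' _ _ _ _ (is_lim_seq_const (1 / lambda)) Hinv).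
     rewrite Rplus_0_r in L. exact L. }
 assert (Hq : is_lim_seq (fun n => q ^ (n - r n)) 0).
 { apply (is_lim_seq_subseq (fun k => q ^ k) 0 (fun n => (n - r n)%nat)).
   - intros P [M HM]. unfold filtermap.
     destruct (ev_big ((INR M + 1) * lambda / (lambda - 1))) as [K HK].
     exists K. intros n Hn. apply HM. specialize (HK n Hn). specialize (Hr2 n).
     apply INR_le. eapply Rle_trans; [|apply INR_sub_ge].
     assert (INR n * (lambda - 1) > (INR M + 1) * lambda).
     { apply (Rmult_lt_compat_r (lambda - 1)) in HK; [|lra].
       replace ((INR M + 1) * lambda / (lambda - 1) * (lambda - 1)) with ((INR M + 1) * lambda)
         in HK by (field; lra). lra. }
     assert (INR n / lambda * lambda = INR n) by (field; lra).
     nra.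
   - apply is_lim_seq_geom. unfold q. rewrite Rabs_pos_eq.
     rewrite <- Rinv_1. apply Rinv_lt_contravar; lra. left; apply Rinv_0_lt_compat; lra. }
 apply is_lim_seq_le_le_loc with
   (u := fun n => INR (r n) / INR n * (1 - q ^ (n - r n)))
   (w := fun n => INR (r n) / INR n + C * / INR n).
 2:{ assert (L := is_lim_seq_mult' _ _ _ _ HrN (is_lim_seq_minus' _ _ _ _ (is_lim_seq_const 1) Hq)).
     replace (1 / lambda * (1 - 0)) with (1 / lambda) in L by ring. exact L. }
 2:{ assert (L := is_lim_seq_plus' _ _ _ _ HrN (is_lim_seq_mult' _ _ _ _ (is_lim_seq_const C) Hinv)).
     replace (1 / lambda + C * 0) with (1 / lambda) in L by ring. exact L. }
 destruct (ev_big (2 * lambda / (lambda - 1) + 2 * lambda)) as [K HK].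
 exists K. intros N HN. specialize (HK N HN). specialize (Hr2 N).
 assert (HN1 : INR N > 2 * lambda).
 { assert (0 < 2 * lambda / (lambda - 1)) by (apply Rdiv_lt_0_compat; lra). lra. }
 assert (HN2 : INR N * (lambda - 1) > 2 * lambda).
 { assert (INR N - 2 * lambda > 2 * lambda / (lambda - 1)) by lra.
   apply (Rmult_lt_compat_r (lambda - 1)) in H; [|lra].
   replace (2 * lambda / (lambda - 1) * (lambda - 1)) with (2 * lambda) in H by (field; lra).
   nra. }
 assert (HNl : INR N / lambda * lambda = INR N) by (field; lra).
 assert (Hr1 : (1 <= r N)%nat).
 { apply INR_le. simpl. assert (INR N / lambda > 2) by nra. lra. }
 assert (HrN' : (r N <= N)%nat).
 { apply INR_le. nra. }
 assert (HN0 : (1 <= N)%nat) by lia.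
 set (rn := r N) in *.
 set (s := wsum rn N theta).
 set (G := Fs (pow theta) rn (N - rn)).
 set (H := Fs (fun i => (INR (rn + (N - rn)) - INR i) * theta ^ i) rn (N - rn)).
 assert (HG : (theta - 1) * G = theta ^ N - theta ^ rn).
 { unfold G. rewrite Fs_geom. replace (rn + (N - rn))%nat with N by lia. ring. }
 assert (HH : (theta - 1) ^ 2 * H <= theta * theta ^ N).
 { unfold H. eapply Rle_trans. apply Fs_H; lra.
   replace (rn + (N - rn) + 1)%nat with (S N) by lia. simpl. lra. }
 assert (HX1 : theta <= theta ^ N).
 { replace theta with (theta ^ 1) at 1 by ring. apply Rle_pow; lra || lia. }
 assert (HY : 1 <= theta ^ rn) by (apply pow_R1_Rle; lra).
 assert (HYX : theta ^ rn <= theta ^ N) by (apply Rle_pow; lra || lia).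
 assert (HINR : 0 < INR N) by lra.
 assert (Hrr : 1 <= INR rn) by (apply (le_INR 1); lia).
 unfold P_win. fold s. split.
 - replace (q ^ (N - rn)) with (theta ^ rn / theta ^ N).
   2:{ unfold q. rewrite pow_inv.
       replace (theta ^ N) with (theta ^ rn * theta ^ (N - rn)).
       2:{ rewrite <- pow_add. f_equal. lia. }
       assert (0 < theta ^ rn) by lra. assert (0 < theta ^ (N - rn)) by (apply pow_lt; lra).
       field; lra. }
   apply (key_lower theta (theta ^ N) (theta ^ rn) (INR rn) (INR N) s G); try lra.
   apply S_lower; lra || lia.
 - apply (key_upper theta (theta ^ N) (theta ^ rn) (INR rn) (INR N) s G H); try lra.
   apply S_upper; lra || lia.
Qed.
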